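(* Let $H$ be a real Hilbert space, $A:D(A)\subset H\to H$ a linear, self-adjoint, positive, unbounded operator with compact inverse, eigenvalues $0<\lambda_1\le\lambda_2\le\dots$ and orthonormal eigenbasis $\{e_n\}$, $H^s:=D(A^{s/2})$, $\alpha\in[0,1)$, and $f:H^\alpha\to H^{-\alpha}$ with $\|f(u)\|_{H^{-\alpha}}\le C$ and $\|f(u_1)-f(u_2)\|_{H^{-\alpha}}\le L\|u_1-u_2\|_{H^\alpha}$ for all $u,u_1,u_2\in H^\alpha$. Let $g\in H^{-\alpha}$ be such that the set of equilibria of $\partial_t u+Au-f(u)=g$ is finite; let $S(t)$ be its solution semigroup on $H$ and $\mathcal{A}$ its global attractor. Let $N\in\mathbb{N}$ satisfy $L<\lambda_{N+1}^{1-\alpha}$ and let $P_N$ be the orthogonal projector onto $\mathrm{span}\{e_1,\dots,e_N\}$. Let $F:H\to\mathbb{R}$ be continuous, $\tau>0$, $k\in\mathbb{N}$, such that $F(k,u):=(F(u),F(S(\tau)u),\dots,F(S((k-1)\tau)u))$ is injective on $\mathcal{A}$; set $\bar{\mathcal{A}}:=F(k,\mathcal{A})\subset\mathbb{R}^k$, $\Theta(\xi):=S(k\tau)\big(F(k,\cdot)|_{\mathcal{A}}\big)^{-1}(\xi)$ for $\xi\in\bar{\mathcal{A}}$, and let $\Theta_N:\mathbb{R}^k\to P_NH$ be any continuous extension of $\xi\mapsto P_N\Theta(\xi)$ from $\bar{\mathcal{A}}$. Let $u:\mathbb{R}\to\mathcal{A}$ be a complete trajectory on the attractor. Then there exists $K_0$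 such that for every $K>K_0$ there is $\beta>0$ (independent of $u$ and $v$) such that every solution $v$ of $$\partial_t v+Av-f(v)+K\Big(P_Nv(t)-\Theta_N\big(F(u(t-k\tau)),\dots,F(u(t-\tau))\big)\Big)=g,\qquad t\ge0,$$ with $v(0)\in H$ satisfies $\|v(t)-u(t)\|_H\le\|v(0)-u(0)\|_He^{-\beta t}$ for all $t\ge0$.
   Context: A complete trajectory on $\mathcal{A}$ is a map $u:\mathbb{R}\to\mathcal{A}$ with $S(t)u(s)=u(t+s)$ for $s\in\mathbb{R}$, $t\ge0$. The global attractor $\mathcal{A}$ of the (dissipative) solution semigroup is compact, so $F(k,\cdot)$ is a homeomorphism from $\mathcal{A}$ onto $\bar{\mathcal{A}}$ and $\Theta$ is continuous; a continuous extension $\Theta_N$ exists by the Tietze extension theorem. *)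

(* Defs.v *)
From Stdlib Require Import Reals Lra List.
From Coquelicot Require Import Coquelicot.
Open Scope R_scope.

(* Spectral model: H = l^2(N) via the orthonormal eigenbasis (e_n) of A,
   A e_n = lam n e_n (0-indexed: lam 0 = lambda_1).  An element of H is its
   coefficient sequence. *)

Definition hseq := nat -> R.

Definition seq_sub (u v : hseq) : hseq := fun n => u n - v n.

Definition inHs (lam : hseq) (s : R) (u : hseq) : Prop :=
  ex_series (fun n => Rpower (lam n) s * (u n) ^ 2).

Definition normHs (lam : hseq) (s : R) (u : hseq) : R :=
  sqrt (Series (fun n => Rpower (lam n) s * (u n) ^ 2)).

Definition inH (u : hseq) : Prop := ex_series (fun n => (u n) ^ 2).

Definition normH (u : hseq) : R := sqrt (Series (fun n => (u n) ^ 2)).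

(* A: linear, self-adjoint, positive, unbounded, compact inverse, with
   eigenvalues 0 < lam_1 <= lam_2 <= ... (tending to infinity). *)
Definition spectrum_ok (lam : hseq) : Prop :=
  0 < lam O /\ (forall n, lam n <= lam (Datatypes.S n)) /\
  (forall M, exists n, M < lam n).

Definition PN (N : nat) (u : hseq) : hseq :=
  fun n => if Nat.ltb n N then u n else 0.

(* (weak) solution on [0,oo) of  v' + A v - f(v) + h(t) = g  *)
Definition is_solution (lam : hseq) (alpha : R) (f : hseq -> hseq) (g : hseq)
    (h : R -> hseq) (v : R -> hseq) : Prop :=
  (forall t, 0 <= t -> inH (v t)) /\
  (forall t, 0 <= t -> forall eps, 0 < eps -> exists delta, 0 < delta /\
     forall s, 0 <= s -> Rabs (s - t) < delta -> normH (seq_sub (v s) (v t)) < eps) /\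
  (forall t, 0 < t -> inHs lam alpha (v t)) /\
  (forall t, 0 < t -> forall eps, 0 < eps -> exists delta, 0 < delta /\
     forall s, 0 < s -> Rabs (s - t) < delta ->
       normHs lam alpha (seq_sub (v s) (v t)) < eps) /\
  (* v in L^2_loc([0,oo); H^1) *)
  (forall T, 0 < T -> exists M, forall m,
     RInt (fun s => sum_f_R0 (fun n => lam n * (v s n) ^ 2) m) 0 T <= M) /\
  (* the equation, tested against each e_n, in integrated form *)
  (forall n t, 0 <= t ->
     ex_RInt (fun s => - lam n * v s n + f (v s) n + g n - h s n) 0 t /\
     v t n - v 0 n = RInt (fun s => - lam n * v s n + f (v s) n + g n - h s n) 0 t).

Definition is_equilibrium (lam : hseq) (alpha : R) (f : hseq -> hseq) (g : hseq)
    (e : hseq) : Prop :=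
  inHs lam alpha e /\ forall n, lam n * e n - f e n = g n.

Definition is_global_attractor (Sg : R -> hseq -> hseq) (Att : hseq -> Prop) : Prop :=
  (forall x, Att x -> inH x) /\
  (forall x : nat -> hseq, (forall m, Att (x m)) ->
     exists phi : nat -> nat, (forall m, (phi m < phi (Datatypes.S m))%nat) /\
       exists y, Att y /\ forall eps, 0 < eps -> exists M, forall m, (M <= m)%nat ->
         normH (seq_sub (x (phi m)) y) < eps) /\
  (forall t, 0 <= t -> forall y, Att y <-> exists x, Att x /\ Sg t x = y) /\
  (forall B : hseq -> Prop, (forall x, B x -> inH x) ->
     (exists r, forall x, B x -> normH x <= r) ->
     forall eps, 0 < eps -> exists T, forall t, T <= t -> forall x, B x ->
       exists y, Att y /\ normH (seq_sub (Sg t x) y) < eps).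

(* Main.v *)
Require Import Defs.
From Stdlib Require Import Reals Lra Lia List FunctionalExtensionality Classical.
From Coquelicot Require Import Coquelicot.
Open Scope R_scope.

Fixpoint psum (a : nat -> R) (M : nat) : R :=
  match M with O => 0 | Datatypes.S m => psum a m + a m end.

Lemma psum_sum_n a m : psum a (Datatypes.S m) = sum_n a m.
Proof.
  induction m. simpl. rewrite sum_O. ring.
  change (psum a (Datatypes.S m) + a (Datatypes.S m) = sum_n a (Datatypes.S m)).
  rewrite IHm, sum_Sn. reflexivity.
Qed.

Lemma psum_f_R0 a m : psum a (Datatypes.S m) = sum_f_R0 a m.
Proof. induction m. simpl; ring. simpl in *. rewrite <- IHm. ring. Qed.

Lemma psum_nonneg a M : (forall n, 0 <= a n) -> 0 <= psum a M.
Proof. intros H; induction M; simpl. lra. specialize (H M). lra. Qed.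

Lemma psum_mono a M P : (forall n, 0 <= a n) -> (M <= P)%nat -> psum a M <= psum a P.
Proof. intros H HMP; induction HMP. lra. simpl. specialize (H m). lra. Qed.

Lemma psum_le a b M : (forall n, a n <= b n) -> psum a M <= psum b M.
Proof. intros H; induction M; simpl. lra. specialize (H M). lra. Qed.

Lemma psum_plus a b M : psum (fun n => a n + b n) M = psum a M + psum b M.
Proof. induction M; simpl. ring. rewrite IHM. ring. Qed.

Lemma psum_scal c a M : psum (fun n => c * a n) M = c * psum a M.
Proof. induction M; simpl. ring. rewrite IHM. ring. Qed.

Lemma psum_ext a b M : (forall n, a n = b n) -> psum a M = psum b M.
Proof. intros H; induction M; simpl. ring. rewrite IHM, H. ring. Qed.

Lemma Series_nonneg a : (forall n, 0 <= a n) -> ex_series a -> 0 <= Series a.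
Proof.
  intros H He.
  assert (Series (fun _ => 0) = 0).
  { rewrite (Series_ext (fun _ => 0) (fun n => 0 * 0)) by (intros; ring).
    rewrite Series_scal_l. ring. }
  rewrite <- H0. apply Series_le; auto. intros; split; [lra| apply H].
Qed.

Lemma is_series_lim a l : is_series a l -> is_lim_seq (sum_n a) l.
Proof. intros H. exact H. Qed.

Lemma psum_le_Series a M : (forall n, 0 <= a n) -> ex_series a -> psum a M <= Series a.
Proof.
  intros H He. destruct M. simpl. apply Series_nonneg; auto.
  rewrite psum_f_R0. rewrite (Series_incr_n a (Datatypes.S M)); [|lia|auto].
  simpl pred. assert (0 <= Series (fun k => a (Datatypes.S M + k)%nat)).
  apply Series_nonneg; auto. apply ex_series_incr_n; auto. lra.
Qed.

Lemma Series_le_bound a B : ex_series a -> (forall M, psum a M <= B) -> Series a <= B.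
Proof.
  intros He HB. pose proof (Series_correct a He) as Hs.
  assert (Hl := is_lim_seq_le (sum_n a) (fun _ => B) (Series a) B).
  simpl in Hl. apply Hl. intros n. rewrite <- psum_sum_n. apply HB.
  exact Hs. apply is_lim_seq_const.
Qed.

Lemma Series_tail_small a : (forall n, 0 <= a n) -> ex_series a ->
  forall eps, 0 < eps -> exists M0, forall M, (M0 <= M)%nat -> Series a - psum a M <= eps.
Proof.
  intros H He eps Heps. pose proof (Series_correct a He) as Hs.
  apply is_series_lim in Hs. apply is_lim_seq_spec in Hs. destruct (Hs (mkposreal eps Heps)) as [M0 HM0].
  exists (Datatypes.S M0). intros M HM. destruct M. inversion HM.
  assert (HM1 : (M0 <= M)%nat) by lia. specialize (HM0 M HM1). simpl in HM0.
  apply Rabs_lt_between in HM0. simpl in HM0. rewrite <- psum_sum_n in HM0. lra.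
Qed.

Lemma tail_shift a M : (forall n, 0 <= a n) -> ex_series a ->
  Series a - psum a M = Series (fun k => a (M + k)%nat).
Proof.
  intros H He. destruct M. simpl. rewrite Rminus_0_r. apply Series_ext. reflexivity.
  rewrite (Series_incr_n a (Datatypes.S M)); [|lia|auto]. rewrite psum_f_R0. simpl pred. ring.
Qed.

Lemma Rpower_gt0 x y : 0 < Rpower x y.
Proof. unfold Rpower. apply exp_pos. Qed.

Lemma term_le_Series a n : (forall k, 0 <= a k) -> ex_series a -> a n <= Series a.
Proof.
  intros H He. apply Rle_trans with (psum a (Datatypes.S n)).
  simpl. pose proof (psum_nonneg a n H). lra. apply psum_le_Series; auto.
Qed.

Lemma exs_sub (w x y : nat -> R) : (forall n, 0 <= w n) ->
  ex_series (fun n => w n * x n ^ 2) -> ex_series (fun n => w n * y n ^ 2) ->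
  ex_series (fun n => w n * (x n - y n) ^ 2).
Proof.
  intros Hw Hx Hy.
  apply (@ex_series_le R_AbsRing R_CompleteNormedModule _ (fun n => 2 * (w n * x n ^ 2) + 2 * (w n * y n ^ 2))).
  - intros n. rewrite Rabs_pos_eq. specialize (Hw n).
    assert (0 <= w n * (x n + y n) ^ 2) by (apply Rmult_le_pos; auto; apply pow2_ge_0).
    nra. specialize (Hw n). apply Rmult_le_pos; auto; apply pow2_ge_0.
  - apply (ex_series_plus (fun n => 2 * (w n * x n ^ 2)) (fun n => 2 * (w n * y n ^ 2))).
    apply (ex_series_scal_l 2 (fun n => w n * x n ^ 2)); auto.
    apply (ex_series_scal_l 2 (fun n => w n * y n ^ 2)); auto.
Qed.

Lemma inHs_sub lam s x y : inHs lam s x -> inHs lam s y -> inHs lam s (seq_sub x y).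
Proof.
  unfold inHs, seq_sub. intros. apply exs_sub; auto. intros; left; apply Rpower_gt0.
Qed.

Lemma inH_sub x y : inH x -> inH y -> inH (seq_sub x y).
Proof.
  unfold inH, seq_sub. intros Hx Hy.
  apply (ex_series_ext (fun n => 1 * (x n - y n) ^ 2)). intros; simpl; ring.
  apply exs_sub. intros; lra.
  apply (ex_series_ext (fun n => x n ^ 2)); auto. intros; simpl; ring.
  apply (ex_series_ext (fun n => y n ^ 2)); auto. intros; simpl; ring.
Qed.

Lemma Series_wnonneg lam s x : inHs lam s x ->
  0 <= Series (fun n => Rpower (lam n) s * x n ^ 2).
Proof.
  intros H. apply Series_nonneg; auto. intros n.
  apply Rmult_le_pos. left; apply Rpower_gt0. apply pow2_ge_0.
Qed.

Lemma normHs_sq lam s x : inHs lam s x ->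
  normHs lam s x ^ 2 = Series (fun n => Rpower (lam n) s * x n ^ 2).
Proof.
  intros H. unfold normHs. rewrite <- Rsqr_pow2. apply Rsqr_sqrt. apply Series_wnonneg; auto.
Qed.

Lemma normHs_nonneg lam s x : 0 <= normHs lam s x.
Proof. apply sqrt_pos. Qed.

Lemma coord_le lam s x n : inHs lam s x ->
  Rpower (lam n) s * x n ^ 2 <= normHs lam s x ^ 2.
Proof.
  intros H. rewrite normHs_sq; auto.
  apply (term_le_Series (fun n => Rpower (lam n) s * x n ^ 2)); auto.
  intros k. apply Rmult_le_pos. left; apply Rpower_gt0. apply pow2_ge_0.
Qed.

Lemma Series_H_nonneg x : inH x -> 0 <= Series (fun n => x n ^ 2).
Proof. intros H. apply Series_nonneg; auto. intros; apply pow2_ge_0. Qed.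

Lemma normH_sq x : inH x -> normH x ^ 2 = Series (fun n => x n ^ 2).
Proof.
  intros H. unfold normH. rewrite <- Rsqr_pow2. apply Rsqr_sqrt. apply Series_H_nonneg; auto.
Qed.

Lemma coordH_le x n : inH x -> x n ^ 2 <= normH x ^ 2.
Proof.
  intros H. rewrite normH_sq; auto.
  apply (term_le_Series (fun n => x n ^ 2)); auto. intros; apply pow2_ge_0.
Qed.

Lemma cont_of_eps (h : R -> R) t :
  (forall eps, 0 < eps -> exists delta, 0 < delta /\
     forall s, Rabs (s - t) < delta -> Rabs (h s - h t) < eps) ->
  continuous h t.
Proof.
  intros H. apply continuity_pt_filterlim.
  intros eps Heps. destruct (H eps Heps) as [d [Hd Hs]]. exists d. split; auto.
  intros x [_ Hx]. apply Hs. exact Hx.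
Qed.

Ltac Rops := repeat match goal with
  | |- context[@mult ?K ?x ?y] => change (@mult K x y) with (Rmult x y)
  | |- context[@plus ?K ?x ?y] => change (@plus K x y) with (Rplus x y)
  | |- context[@minus ?K ?x ?y] => change (@minus K x y) with (Rminus x y)
  | |- context[@opp ?K ?x] => change (@opp K x) with (Ropp x)
  | |- context[@scal ?K ?V ?x ?y] => change (@scal K V x y) with (Rmult x y)
  | |- context[@zero ?K] => change (@zero K) with 0
  | |- context[@one ?K] => change (@one K) with 1
  end.

Lemma is_derive_val (f : R -> R) x l l' : is_derive f x l -> l = l' -> is_derive f x l'.
Proof. intros H ->; exact H. Qed.

Lemma deriv_psum_sq (W : R -> nat -> R) (W' : nat -> R) s M :
  (forall n, is_derive (fun r => W r n) s (W' n)) ->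
  is_derive (fun r => psum (fun n => W r n ^ 2) M) s (psum (fun n => 2 * W s n * W' n) M).
Proof.
  intros H. induction M.
  - simpl. apply (is_derive_const (V := R_NormedModule) 0 s).
  - simpl. apply (is_derive_plus (fun r => psum (fun n => W r n ^ 2) M) (fun r => W r M ^ 2)); auto.
    eapply is_derive_val. apply (is_derive_pow (fun r => W r M) 2 s (W' M)); auto.
    simpl. ring.
Qed.

Lemma exp_decay_lemma (E dE : R -> R) (a b c k : R) :
  a < b ->
  (forall s, a <= s <= b -> is_derive E s (dE s)) ->
  (forall s, a <= s <= b -> dE s <= - k * E s + c) ->
  0 < k -> 0 <= c ->
  E b <= exp (- k * (b - a)) * E a + c / k.
Proof.
  intros Hab Hd Hb Hk Hc.
  set (c0 := c / k).
  set (Psi := fun s => exp (k * s) * (E s - c0)).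
  set (dPsi := fun s => exp (k * s) * (k * (E s - c0) + dE s)).
  assert (HdP : forall s, a <= s <= b -> is_derive Psi s (dPsi s)).
  { intros s Hs. unfold Psi, dPsi.
    eapply is_derive_val.
    apply (is_derive_mult (fun s => exp (k * s)) (fun s => E s - c0)).
    - eapply is_derive_val. apply (is_derive_comp exp (fun s => k * s)).
      apply is_derive_exp. eapply is_derive_val.
      apply (is_derive_scal (fun s => s) s k 1). eapply is_derive_val. apply is_derive_id. reflexivity.
      reflexivity. reflexivity.
    - eapply is_derive_val. apply (is_derive_minus E (fun _ => c0)). apply Hd; auto.
      apply is_derive_const. reflexivity.
    - intros; apply Rmult_comm.
    - simpl. unfold scal; simpl. repeat match goal with |- context[mult ?x ?y] => change (mult x y) with (x*y) end. repeat match goal with |- context[plus ?x ?y] => change (plus x y) with (x+y) end. Rops. ring. }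

  destruct (MVT_gen Psi a b dPsi) as [c1 [Hc1 Heq]].
  - intros x Hx. rewrite Rmin_left, Rmax_right in Hx by lra. apply HdP; lra.
  - intros x Hx. rewrite Rmin_left, Rmax_right in Hx by lra.
    apply continuity_pt_filterlim. apply (@ex_derive_continuous R_AbsRing R_NormedModule). exists (dPsi x). apply HdP; lra.
  - rewrite Rmin_left, Rmax_right in Hc1 by lra.
    assert (dPsi c1 <= 0).
    { unfold dPsi. assert (0 < exp (k * c1)) by apply exp_pos.
      specialize (Hb c1 Hc1). unfold c0.
      assert (k * (E c1 - c / k) + dE c1 <= 0).
      { replace (k * (E c1 - c / k)) with (k * E c1 - c) by (field; lra). nra. }
      nra. }
    assert (HPs : Psi b <= Psi a) by nra.
    unfold Psi in HPs.
    assert (Hea : exp (- k * (b - a)) * exp (k * b) = exp (k * a)).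
    { rewrite <- exp_plus. f_equal. ring. }
    assert (He0 : 0 < exp (- k * (b - a))) by apply exp_pos.
    assert (He1 : exp (- k * (b - a)) <= 1).
    { rewrite <- exp_0. destruct (Req_dec (b-a) 0). lra. left. apply exp_increasing. nra. }
    assert (Hc0 : 0 <= c0) by (unfold c0; apply Rdiv_le_0_compat; lra).
    assert (H5 : exp (- k * (b - a)) * (exp (k * b) * (E b - c0)) <= exp (- k * (b - a)) * (exp (k * a) * (E a - c0))).
    { apply Rmult_le_compat_l; lra. }
    rewrite <- Rmult_assoc, Hea in H5.
    assert (Hka : 0 < exp (k * a)) by apply exp_pos.
    assert (H6 : E b - c0 <= exp (- k * (b - a)) * (E a - c0)).
    { apply Rmult_le_reg_l with (exp (k * a)); auto. nra. }
    fold c0. nra.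
Qed.

Lemma unif_small (T : nat -> R -> R) a b eps :
  a <= b ->
  (forall t, a <= t <= b -> exists M delta, 0 < delta /\
     forall s, a <= s <= b -> Rabs (s - t) < delta ->
       forall M', (M <= M')%nat -> T M' s <= eps) ->
  exists M0, forall s, a <= s <= b -> forall M, (M0 <= M)%nat -> T M s <= eps.
Proof.
  intros Hab H.
  set (Q := fun x => exists M0, forall s, a <= s <= x -> s <= b ->
              forall M, (M0 <= M)%nat -> T M s <= eps).
  set (E := fun x => a <= x <= b /\ Q x).
  assert (HEa : E a).
  { split. lra. destruct (H a ltac:(lra)) as [M [d [Hd Hs]]]. exists M.
    intros s Hs1 Hs2 M' HM'. apply (Hs s); try lra.
    replace (s - a) with 0 by lra. rewrite Rabs_R0; lra. auto. }
  assert (Hbd : bound E). { exists b. intros x [Hx _]. lra. }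
  destruct (completeness E Hbd (ex_intro _ a HEa)) as [c [Hub Hlub]].
  assert (Hac : a <= c) by (apply Hub; auto).
  assert (Hcb : c <= b). { apply Hlub. intros x [Hx _]. lra. }
  destruct (H c ltac:(lra)) as [Mc [d [Hd Hcs]]].
  assert (Hx : exists x, E x /\ c - d < x).
  { apply NNPP. intros Hn.
    assert (c <= c - d).
    { apply Hlub. intros x Ex. apply Rnot_lt_le. intros Hlt. apply Hn. exists x; auto. }
    lra. }
  destruct Hx as [x [[Hx1 [M0 HQx]] Hxd]].
  assert (Hxc : x <= c) by (apply Hub; split; auto; exists M0; auto).
  set (y := Rmin (c + d / 2) b).
  assert (HQy : Q y).
  { exists (Nat.max M0 Mc). intros s Hs Hsb M HM.
    destruct (Rle_dec s x).
    - apply (HQx s); try lra. lia.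
    - apply (Hcs s); try lra.
      assert (s <= c + d/2) by (apply Rle_trans with y; [lra| apply Rmin_l]).
      apply Rabs_def1; lra. lia. }
  assert (Hyb : y <= b) by apply Rmin_r.
  assert (Hay : a <= y). { unfold y. apply Rmin_glb; lra. }
  assert (Hyc : y <= c) by (apply Hub; split; auto).
  assert (Hyb2 : y = b).
  { unfold y in *. destruct (Rle_dec (c + d/2) b).
    - rewrite Rmin_left in Hyc by lra. lra.
    - rewrite Rmin_right in * by lra. lra. }
  destruct HQy as [M1 HM1]. exists M1.
  intros s Hs M HM. apply (HM1 s); try lra; auto.
Qed.

Lemma ball_R (x y e : R) : ball x e y <-> Rabs (y - x) < e.
Proof. reflexivity. Qed.

Lemma ball_pos (t y : R) (Ht : 0 < t) : ball t (mkposreal t Ht) y -> 0 < y.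
Proof. intros Hy. change (Rabs (y - t) < t) in Hy. destruct (Rabs_def2 _ _ Hy). lra. Qed.

Lemma deriv_from_int (x G : R -> R) t : 0 < t ->
  (forall r, 0 <= r -> ex_RInt G 0 r /\ x r - x 0 = RInt G 0 r) ->
  continuous G t -> is_derive x t (G t).
Proof.
  intros Ht Hint Hc.
  assert (H1 : is_derive (fun r => RInt G 0 r) t (G t)).
  { apply (is_derive_RInt G (fun r => RInt G 0 r) 0 t); auto.
    exists (mkposreal t Ht). intros y Hy. apply ball_pos in Hy.
    apply (@RInt_correct R_CompleteNormedModule). apply Hint. lra. }
  assert (H2 : is_derive (fun r => x 0 + RInt G 0 r) t (G t)).
  { eapply is_derive_val. apply (is_derive_plus (fun _ => x 0) (fun r => RInt G 0 r)).
    apply is_derive_const. exact H1. simpl. Rops. ring. }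
  apply (is_derive_ext_loc (fun r => x 0 + RInt G 0 r)); auto.
  exists (mkposreal t Ht). intros y Hy. apply ball_pos in Hy.
  assert (Hy' : 0 <= y) by lra. destruct (Hint y Hy') as [_ Heq]. lra.
Qed.

Definition contHs lam s0 (X : R -> hseq) t :=
  forall eps, 0 < eps -> exists delta, 0 < delta /\ forall r, 0 < r -> Rabs (r - t) < delta ->
    normHs lam s0 (seq_sub (X r) (X t)) < eps.

Lemma coord_cont lam s0 (X : R -> hseq) n t : 0 < t ->
  (forall r, 0 < r -> inHs lam s0 (X r)) -> contHs lam s0 X t ->
  continuous (fun r => X r n) t.
Proof.
  intros Ht Hin Hc. apply cont_of_eps. intros eps Heps.
  set (c := Rpower (lam n) s0). assert (Hc0 : 0 < c) by apply Rpower_gt0.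
  destruct (Hc (eps * sqrt c)) as [d [Hd Hr]].
  { apply Rmult_lt_0_compat; auto. apply sqrt_lt_R0; auto. }
  exists (Rmin d t). split. apply Rmin_glb_lt; auto.
  intros s Hs. assert (Hs1 : Rabs (s - t) < d) by (eapply Rlt_le_trans; [exact Hs| apply Rmin_l]).
  assert (Hs2 : Rabs (s - t) < t) by (eapply Rlt_le_trans; [exact Hs| apply Rmin_r]).
  assert (Hspos : 0 < s) by (apply Rabs_def2 in Hs2; lra).
  specialize (Hr s Hspos Hs1).
  pose proof (coord_le lam s0 (seq_sub (X s) (X t)) n (inHs_sub _ _ _ _ (Hin s Hspos) (Hin t Ht))) as Hco.
  fold c in Hco. change (seq_sub (X s) (X t) n) with (X s n - X t n) in Hco.
  assert (Hn0 := normHs_nonneg lam s0 (seq_sub (X s) (X t))).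
  assert (Hsq : normHs lam s0 (seq_sub (X s) (X t)) ^ 2 < (eps * sqrt c) ^ 2).
  { nra. }
  replace ((eps * sqrt c) ^ 2) with (eps ^ 2 * c) in Hsq.
  2:{ rewrite Rpow_mult_distr. rewrite <- Rsqr_pow2 with (x := sqrt c). rewrite Rsqr_sqrt; lra. }
  assert (Hd2 : (X s n - X t n) ^ 2 < eps ^ 2).
  { apply Rmult_lt_reg_l with c; auto. nra. }
  rewrite <- (Rabs_pos_eq eps) in Hd2 by lra.
  rewrite <- !Rsqr_pow2 in Hd2. rewrite <- Rsqr_abs in Hd2.
  apply Rsqr_lt_abs_0 in Hd2. rewrite (Rabs_pos_eq eps) in Hd2 by lra. exact Hd2.
Qed.

Lemma energy_ineq (W D mu om : nat -> R) beta Lp eps M :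
  0 < Lp -> (forall n, 0 < om n) -> (forall n, beta <= mu n - Lp * om n) ->
  psum (fun n => / om n * D n ^ 2) M <= Lp ^ 2 * (psum (fun n => om n * W n ^ 2) M + eps) ->
  psum (fun n => 2 * W n * (- mu n * W n + D n)) M
    <= - (2 * beta) * psum (fun n => W n ^ 2) M + Lp * eps.
Proof.
  intros HLp Hom Hmu HD.
  assert (Hterm : forall n, 2 * W n * (- mu n * W n + D n) <=
     (- (2 * beta)) * W n ^ 2 + (- Lp) * (om n * W n ^ 2) + / Lp * (/ om n * D n ^ 2)).
  { intros n. specialize (Hom n). specialize (Hmu n).
    assert (H1 : 2 * W n * D n <= Lp * om n * W n ^ 2 + / Lp * / om n * D n ^ 2).
    { assert (Hp : 0 < Lp * om n) by (apply Rmult_lt_0_compat; auto).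
      apply Rmult_le_reg_l with (Lp * om n); auto.
      replace (Lp * om n * (Lp * om n * W n ^ 2 + / Lp * / om n * D n ^ 2))
        with ((Lp * om n * W n) ^ 2 + D n ^ 2) by (field; lra).
      pose proof (pow2_ge_0 (Lp * om n * W n - D n)). nra. }
    assert (H2 : 0 <= W n ^ 2) by apply pow2_ge_0.
    assert (H3 : - mu n * W n ^ 2 <= - (beta + Lp * om n) * W n ^ 2) by nra.
    nra. }
  eapply Rle_trans. apply psum_le. exact Hterm.
  rewrite !psum_plus, !psum_scal.
  assert (HLp2 : / Lp * (Lp ^ 2 * (psum (fun n => om n * W n ^ 2) M + eps))
          = Lp * psum (fun n => om n * W n ^ 2) M + Lp * eps) by (field; lra).
  assert (/ Lp * psum (fun n => / om n * D n ^ 2) M <=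
          / Lp * (Lp ^ 2 * (psum (fun n => om n * W n ^ 2) M + eps))).
  { apply Rmult_le_compat_l; auto. left; apply Rinv_0_lt_compat; auto. }
  lra.
Qed.

Lemma tail_cmp (om : nat -> R) (Ws Wt dv dU : hseq) M :
  (forall n, 0 < om n) ->
  ex_series (fun n => om n * Ws n ^ 2) -> ex_series (fun n => om n * Wt n ^ 2) ->
  ex_series (fun n => om n * dv n ^ 2) -> ex_series (fun n => om n * dU n ^ 2) ->
  (forall n, Ws n = Wt n + (dv n - dU n)) ->
  Series (fun n => om n * Ws n ^ 2) - psum (fun n => om n * Ws n ^ 2) M <=
  2 * (Series (fun n => om n * Wt n ^ 2) - psum (fun n => om n * Wt n ^ 2) M)
  + 4 * Series (fun n => om n * dv n ^ 2) + 4 * Series (fun n => om n * dU n ^ 2).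
Proof.
  intros Hom Es Et Ev EU Heq.
  assert (Hnn : forall x : hseq, forall n, 0 <= om n * x n ^ 2).
  { intros x n. apply Rmult_le_pos. left; auto. apply pow2_ge_0. }
  assert (Tv : Series (fun n => om n * dv n ^ 2) - psum (fun n => om n * dv n ^ 2) M
               <= Series (fun n => om n * dv n ^ 2)).
  { pose proof (psum_nonneg (fun n => om n * dv n ^ 2) M (Hnn dv)). lra. }
  assert (TU : Series (fun n => om n * dU n ^ 2) - psum (fun n => om n * dU n ^ 2) M
               <= Series (fun n => om n * dU n ^ 2)).
  { pose proof (psum_nonneg (fun n => om n * dU n ^ 2) M (Hnn dU)). lra. }
  rewrite !tail_shift in * by auto.
  set (sh := fun x : hseq => fun k => om (M + k)%nat * x (M + k)%nat ^ 2).
  assert (Esh : forall x : hseq, ex_series (fun n => om n * x n ^ 2) -> ex_series (sh x)).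
  { intros x Ex. apply (ex_series_incr_n (fun n => om n * x n ^ 2) M). auto. }
  change (Series (sh Ws) <= 2 * Series (sh Wt) + 4 * Series (fun n => om n * dv n ^ 2) + 4 * Series (fun n => om n * dU n ^ 2)).
  change (Series (sh dv) <= Series (fun n => om n * dv n ^ 2)) in Tv.
  change (Series (sh dU) <= Series (fun n => om n * dU n ^ 2)) in TU.
  assert (Hle : Series (sh Ws) <= Series (fun k => 2 * sh Wt k + 4 * sh dv k + 4 * sh dU k)).
  { apply Series_le.
    - intros k. split. apply Hnn. unfold sh. rewrite Heq.
      specialize (Hom (M + k)%nat).
      set (p := Wt (M + k)%nat). set (q := dv (M + k)%nat). set (r := dU (M + k)%nat).
      assert (0 <= om (M + k)%nat * (p - q + r) ^ 2) by (apply Rmult_le_pos; [lra|apply pow2_ge_0]).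
      assert (0 <= om (M + k)%nat * (q + r) ^ 2) by (apply Rmult_le_pos; [lra|apply pow2_ge_0]).
      nra.
    - apply (ex_series_plus (fun k => 2 * sh Wt k + 4 * sh dv k) (fun k => 4 * sh dU k)).
      apply (ex_series_plus (fun k => 2 * sh Wt k) (fun k => 4 * sh dv k)).
      apply (ex_series_scal_l 2 (sh Wt)); auto.
      apply (ex_series_scal_l 4 (sh dv)); auto.
      apply (ex_series_scal_l 4 (sh dU)); auto. }
  rewrite Series_plus, Series_plus, !Series_scal_l in Hle.
  - lra.
  - apply (ex_series_scal_l 2 (sh Wt)); auto.
  - apply (ex_series_scal_l 4 (sh dv)); auto.
  - apply (ex_series_plus (fun k => 2 * sh Wt k) (fun k => 4 * sh dv k)).
    apply (ex_series_scal_l 2 (sh Wt)); auto.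
    apply (ex_series_scal_l 4 (sh dv)); auto.
  - apply (ex_series_scal_l 4 (sh dU)); auto.
Qed.

Lemma lam_pos lam : spectrum_ok lam -> forall n, 0 < lam n.
Proof.
  intros [H0 [Hm _]] n. induction n. auto. specialize (Hm n). lra.
Qed.

Lemma lam_mono lam : spectrum_ok lam -> forall n m, (n <= m)%nat -> lam n <= lam m.
Proof.
  intros [H0 [Hm _]] n m Hnm. induction Hnm. lra. specialize (Hm m). lra.
Qed.

Lemma spectral_choice lam alpha L N :
  spectrum_ok lam -> 0 <= alpha < 1 -> L < Rpower (lam N) (1 - alpha) ->
  exists Lp beta K0, 0 < Lp /\ L <= Lp /\ 0 < beta /\
    forall K, K0 < K -> forall n,
      beta <= (lam n + (if Nat.ltb n N then K else 0)) - Lp * Rpower (lam n) alpha.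
Proof.
  intros Hsp Ha HL.
  set (q := Rpower (lam N) (1 - alpha)).
  assert (Hq : 0 < q) by apply Rpower_gt0.
  set (Lp := Rmax L (q / 2)).
  assert (HLp0 : 0 < Lp). { unfold Lp. apply Rlt_le_trans with (q / 2); [lra| apply Rmax_r]. }
  set (p := Rpower (lam N) alpha).
  assert (HLLp : L <= Lp) by apply Rmax_l.
  assert (HLpq : Lp < q). { unfold Lp. apply Rmax_lub_lt; [exact HL| lra]. }
  assert (Hp : 0 < p) by apply Rpower_gt0.
  exists Lp, (p * (q - Lp)), (Lp * p + p * (q - Lp)).
  split; auto. split; auto. split. apply Rmult_lt_0_compat; lra.
  intros K HK n.
  assert (Hln := lam_pos lam Hsp n).
  assert (Hlam : lam n = Rpower (lam n) alpha * Rpower (lam n) (1 - alpha)).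
  { rewrite <- Rpower_plus. replace (alpha + (1 - alpha)) with 1 by ring. rewrite Rpower_1; auto. }
  destruct (Nat.ltb n N) eqn:Hn.
  - apply Nat.ltb_lt in Hn.
    assert (Hpn : Rpower (lam n) alpha <= p).
    { apply Rle_Rpower_l. lra. split; auto. apply lam_mono; auto. lia. }
    assert (Lp * Rpower (lam n) alpha <= Lp * p) by (apply Rmult_le_compat_l; lra). lra.
  - apply Nat.ltb_ge in Hn.
    assert (Hpn : p <= Rpower (lam n) alpha).
    { apply Rle_Rpower_l. lra. split. apply lam_pos; auto. apply lam_mono; auto. }
    assert (Hqn : q <= Rpower (lam n) (1 - alpha)).
    { apply Rle_Rpower_l. lra. split. apply lam_pos; auto. apply lam_mono; auto. }
    rewrite Hlam at 1. nra.
Qed.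

Lemma f_contHs lam alpha C L (f : hseq -> hseq) (X : R -> hseq) t :
  (forall w, inHs lam alpha w -> inHs lam (- alpha) (f w) /\ normHs lam (- alpha) (f w) <= C) ->
  (forall w1 w2, inHs lam alpha w1 -> inHs lam alpha w2 ->
     normHs lam (- alpha) (seq_sub (f w1) (f w2)) <= L * normHs lam alpha (seq_sub w1 w2)) ->
  (forall r, 0 < r -> inHs lam alpha (X r)) -> 0 < t ->
  contHs lam alpha X t -> contHs lam (- alpha) (fun r => f (X r)) t.
Proof.
  intros Hb Hlip Hin Ht Hc eps Heps.
  assert (HL1 : 0 < Rabs L + 1) by (pose proof (Rabs_pos L); lra).
  destruct (Hc (eps / (Rabs L + 1))) as [d [Hd Hr]].
  { apply Rdiv_lt_0_compat; auto. }
  exists d. split; auto. intros r Hr0 Hrt.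
  specialize (Hr r Hr0 Hrt).
  eapply Rle_lt_trans. apply Hlip; auto.
  set (x := normHs lam alpha (seq_sub (X r) (X t))) in *.
  assert (0 <= x) by apply normHs_nonneg.
  assert (L * x <= Rabs L * x) by (apply Rmult_le_compat_r; auto; apply Rle_abs).
  assert (Rabs L * x <= Rabs L * (eps / (Rabs L + 1))).
  { apply Rmult_le_compat_l. apply Rabs_pos. lra. }
  assert (Rabs L * (eps / (Rabs L + 1)) < eps).
  { apply Rmult_lt_reg_l with (Rabs L + 1); auto.
    replace ((Rabs L + 1) * (Rabs L * (eps / (Rabs L + 1)))) with (Rabs L * eps) by (field; lra).
    nra. }
  lra.
Qed.

Lemma cont_comb (x1 x2 p1 p2 : R -> R) (c g0 K s : R) :
  continuous x1 s -> continuous x2 s -> continuous p1 s -> continuous p2 s ->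
  continuous (fun r => - c * x1 r + x2 r + g0 - K * (p1 r - p2 r)) s.
Proof.
  intros H1 H2 H3 H4.
  pose proof (continuous_minus p1 p2 s H3 H4) as H34.
  pose proof (continuous_mult (fun _ => K) _ s (continuous_const K s) H34) as HK.
  pose proof (continuous_mult (fun _ => - c) x1 s (continuous_const (- c) s) H1) as Hc1.
  pose proof (continuous_plus _ x2 s Hc1 H2) as Ha.
  pose proof (continuous_plus _ (fun _ => g0) s Ha (continuous_const g0 s)) as Hb.
  pose proof (continuous_minus _ _ s Hb HK) as Hf.
  exact Hf.
Qed.

Lemma eps_remove x y c : (forall e, 0 < e <= 1 -> x <= y + c * e) -> x <= y.
Proof.
  intros H. destruct (Rle_dec x y) as [|Hn]; auto. exfalso.
  assert (Hc : 0 < Rabs c + 1) by (pose proof (Rabs_pos c); lra).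
  set (e := Rmin 1 ((x - y) / (Rabs c + 1))).
  assert (He0 : 0 < e). { unfold e. apply Rmin_glb_lt. lra. apply Rdiv_lt_0_compat; lra. }
  assert (He1 : e <= 1) by apply Rmin_l.
  assert (He2 : e <= (x - y) / (Rabs c + 1)) by apply Rmin_r.
  specialize (H e (conj He0 He1)).
  assert (c * e <= Rabs c * e) by (apply Rmult_le_compat_r; [lra| apply Rle_abs]).
  assert ((Rabs c + 1) * e <= x - y).
  { apply Rmult_le_reg_l with (/ (Rabs c + 1)). apply Rinv_0_lt_compat; lra.
    replace (/ (Rabs c + 1) * ((Rabs c + 1) * e)) with e by (field; lra).
    replace (/ (Rabs c + 1) * (x - y)) with ((x - y) / (Rabs c + 1)) by (unfold Rdiv; ring). auto. }
  nra.
Qed.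

Lemma sq_lt_sqrt x c : 0 <= x -> x < sqrt c -> x ^ 2 < c.
Proof.
  intros H0 H1. destruct (Rle_dec c 0).
  - rewrite sqrt_neg_0 in H1 by auto. lra.
  - replace c with (sqrt c ^ 2). nra.
    rewrite <- Rsqr_pow2. apply Rsqr_sqrt. lra.
Qed.

Lemma near0 (v0 u0 va ua : hseq) eta c0 : 0 < eta ->
  inH v0 -> inH u0 -> inH va -> inH ua ->
  normH (seq_sub va v0) ^ 2 <= c0 -> normH (seq_sub ua u0) ^ 2 <= c0 ->
  normH (seq_sub va ua) ^ 2 <= (1 + eta) * normH (seq_sub v0 u0) ^ 2 + (1 + / eta) * (4 * c0).
Proof.
  intros He Hv0 Hu0 Hva Hua HP HQ.
  pose proof (inH_sub _ _ Hva Hv0) as EP. pose proof (inH_sub _ _ Hua Hu0) as EQ.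
  pose proof (inH_sub _ _ Hv0 Hu0) as EY. pose proof (inH_sub _ _ Hva Hua) as EX.
  rewrite normH_sq in HP by auto. rewrite normH_sq in HQ by auto.
  rewrite (normH_sq (seq_sub v0 u0)) by auto. rewrite (normH_sq (seq_sub va ua)) by auto.
  unfold inH, seq_sub in *.
  set (Y := fun n => (v0 n - u0 n) ^ 2) in *.
  set (P := fun n => (va n - v0 n) ^ 2) in *.
  set (Q := fun n => (ua n - u0 n) ^ 2) in *.
  assert (Ecomb : ex_series (fun n => (1 + eta) * Y n + (1 + / eta) * (2 * P n + 2 * Q n))).
  { apply (ex_series_plus (fun n => (1 + eta) * Y n) (fun n => (1 + / eta) * (2 * P n + 2 * Q n))).
    apply (ex_series_scal_l (1 + eta) Y); auto.
    apply (ex_series_scal_l (1 + / eta) (fun n => 2 * P n + 2 * Q n)).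
    apply (ex_series_plus (fun n => 2 * P n) (fun n => 2 * Q n)).
    apply (ex_series_scal_l 2 P); auto. apply (ex_series_scal_l 2 Q); auto. }
  eapply Rle_trans. apply (Series_le (fun n => (va n - ua n) ^ 2) (fun n => (1 + eta) * Y n + (1 + / eta) * (2 * P n + 2 * Q n))). 2: exact Ecomb.
  - intros n. split. apply pow2_ge_0. unfold Y, P, Q.
    set (y := v0 n - u0 n). set (p := va n - v0 n). set (q := ua n - u0 n).
    replace (va n - ua n) with (y + (p - q)) by (unfold y, p, q; ring).
    assert (H1 : (y + (p - q)) ^ 2 <= (1 + eta) * y ^ 2 + (1 + / eta) * (p - q) ^ 2).
    { apply Rmult_le_reg_l with eta; auto.
      replace (eta * ((1 + eta) * y ^ 2 + (1 + / eta) * (p - q) ^ 2))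
        with (eta * ((y + (p - q)) ^ 2) + (eta * y - (p - q)) ^ 2) by (field; lra).
      pose proof (pow2_ge_0 (eta * y - (p - q))). lra. }
    assert (H2 : (p - q) ^ 2 <= 2 * p ^ 2 + 2 * q ^ 2) by (pose proof (pow2_ge_0 (p + q)); nra).
    assert (0 < 1 + / eta) by (pose proof (Rinv_0_lt_compat eta He); lra).
    nra.
  - rewrite Series_plus, !Series_scal_l, Series_plus, !Series_scal_l.
    + assert (0 < 1 + / eta) by (pose proof (Rinv_0_lt_compat eta He); lra).
      apply Rplus_le_compat_l. apply Rmult_le_compat_l; lra.
    + apply (ex_series_scal_l 2 P); auto.
    + apply (ex_series_scal_l 2 Q); auto.
    + apply (ex_series_scal_l (1 + eta) Y); auto.
    + apply (ex_series_scal_l (1 + / eta) (fun n => 2 * P n + 2 * Q n)).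
      apply (ex_series_plus (fun n => 2 * P n) (fun n => 2 * Q n)).
      apply (ex_series_scal_l 2 P); auto. apply (ex_series_scal_l 2 Q); auto.
Qed.

Theorem proposition4p7
  (lam : hseq) (alpha C L : R) (f : hseq -> hseq) (g : hseq)
  (S : R -> hseq -> hseq) (Att : hseq -> Prop) (N : nat)
  (F : hseq -> R) (tau : R) (k : nat) (ThetaN : hseq -> hseq) :
  spectrum_ok lam ->
  0 <= alpha < 1 ->
  (forall w, inHs lam alpha w ->
     inHs lam (- alpha) (f w) /\ normHs lam (- alpha) (f w) <= C) ->
  (forall w1 w2, inHs lam alpha w1 -> inHs lam alpha w2 ->
     normHs lam (- alpha) (seq_sub (f w1) (f w2))
       <= L * normHs lam alpha (seq_sub w1 w2)) ->
  inHs lam (- alpha) g ->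
  (exists l : list hseq, forall e, is_equilibrium lam alpha f g e -> In e l) ->
  (* S is the solution semigroup on H *)
  (forall u0, inH u0 ->
     S 0 u0 = u0 /\ is_solution lam alpha f g (fun _ _ => 0) (fun t => S t u0)) ->
  is_global_attractor S Att ->
  L < Rpower (lam N) (1 - alpha) ->
  (* F continuous on H *)
  (forall x, inH x -> forall eps, 0 < eps -> exists delta, 0 < delta /\
     forall y, inH y -> normH (seq_sub y x) < delta -> Rabs (F y - F x) < eps) ->
  0 < tau ->
  (* F(k,.) injective on the attractor *)
  (forall u1 u2, Att u1 -> Att u2 ->
     (forall j, (j < k)%nat -> F (S (INR j * tau) u1) = F (S (INR j * tau) u2)) ->
     u1 = u2) ->
  (* Theta_N : R^k -> P_N H, continuous, extends xi |-> P_N Theta(xi) *)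
  (forall xi n, (N <= n)%nat -> ThetaN xi n = 0) ->
  (forall xi eps, 0 < eps -> exists delta, 0 < delta /\
     forall xi', (forall j, (j < k)%nat -> Rabs (xi' j - xi j) < delta) ->
       forall n, (n < N)%nat -> Rabs (ThetaN xi' n - ThetaN xi n) < eps) ->
  (forall w, Att w ->
     ThetaN (fun j => F (S (INR j * tau) w)) = PN N (S (INR k * tau) w)) ->
  exists K0, forall K, K0 < K -> exists beta, 0 < beta /\
    (* beta independent of u and v *)
    forall u : R -> hseq,
    (* u is a complete trajectory on the attractor *)
    (forall s, Att (u s)) ->
    (forall s t, 0 <= t -> S t (u s) = u (t + s)) ->
    forall v : R -> hseq,
      inH (v 0) ->
      is_solution lam alpha f g
        (fun s n => K * (PN N (v s) n
           - ThetaN (fun j => F (u (s - INR k * tau + INR j * tau))) n)) v ->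
      forall t, 0 <= t ->
        normH (seq_sub (v t) (u t)) <= normH (seq_sub (v 0) (u 0)) * exp (- beta * t).
Proof.
  intros Hsp Ha Hfb Hlip Hg Heq HS Hatt HL HF Htau Hinj HTh0 HThc HTh.
  destruct (spectral_choice lam alpha L N Hsp Ha HL) as [Lp [beta [K0 [HLp [HLLp [Hbeta Hspec]]]]]].
  exists K0. intros K HK. exists beta. split; auto.
  intros u Hu Hut v Hv0 Hsol t Ht.
  destruct Hatt as [HattH _].
  set (U := fun s => S s (u 0)).
  assert (HuU : forall s, 0 <= s -> u s = U s).
  { intros s Hs. unfold U. rewrite (Hut 0 s Hs). f_equal; ring. }
  destruct (HS (u 0) (HattH _ (Hu 0))) as [HU0 HsolU].
  destruct Hsol as [Hv_H [Hv_Hc [Hv_a [Hv_ac [_ Hv_int]]]]].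
  destruct HsolU as [HU_H [HU_Hc [HU_a [HU_ac [_ HU_int]]]]].
  assert (HTheta : forall s, ThetaN (fun j => F (u (s - INR k * tau + INR j * tau))) = PN N (u s)).
  { intros s. set (w := u (s - INR k * tau)).
    assert (Hw : forall j, S (INR j * tau) w = u (s - INR k * tau + INR j * tau)).
    { intros j. unfold w. rewrite Hut. f_equal; ring. apply Rmult_le_pos; [apply pos_INR | lra]. }
    replace (fun j => F (u (s - INR k * tau + INR j * tau))) with (fun j => F (S (INR j * tau) w)).
    - rewrite (HTh w (Hu _)). unfold w. rewrite Hut. f_equal. f_equal. ring.
      apply Rmult_le_pos; [apply pos_INR|lra].
    - apply functional_extensionality. intros j. rewrite Hw. reflexivity. }
  set (om := fun n => Rpower (lam n) alpha).
  set (mu := fun n => lam n + (if Nat.ltb n N then K else 0)).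
  set (W := fun s => seq_sub (v s) (U s)).
  set (D := fun s => seq_sub (f (v s)) (f (U s))).
  assert (HcontV : forall t, 0 < t -> contHs lam alpha v t) by exact Hv_ac.
  assert (HcontU : forall t, 0 < t -> contHs lam alpha U t) by exact HU_ac.
  assert (HvA : forall t, 0 < t -> inHs lam alpha (v t)) by exact Hv_a.
  assert (HUA : forall t, 0 < t -> inHs lam alpha (U t)) by exact HU_a.
  assert (HvH : forall t, 0 <= t -> inH (v t)) by exact Hv_H.
  assert (HUH : forall t, 0 <= t -> inH (U t)) by exact HU_H.
  assert (Hderiv : forall n s, 0 < s -> is_derive (fun r => W r n) s (- mu n * W s n + D s n)).
  { intros n s Hs.
    assert (HcvN : continuous (fun r => v r n) s) by (apply (coord_cont lam alpha); auto).
    assert (HcuN : continuous (fun r => U r n) s) by (apply (coord_cont lam alpha); auto).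
    assert (HcfvN : continuous (fun r => f (v r) n) s).
    { apply (coord_cont lam (- alpha) (fun r => f (v r))); auto.
      intros r Hr. apply Hfb. auto.
      apply (f_contHs lam alpha C L); auto. }
    assert (HcfuN : continuous (fun r => f (U r) n) s).
    { apply (coord_cont lam (- alpha) (fun r => f (U r))); auto.
      intros r Hr. apply Hfb. auto.
      apply (f_contHs lam alpha C L); auto. }
    assert (HcPv : continuous (fun r => PN N (v r) n) s).
    { unfold PN. destruct (Nat.ltb n N). exact HcvN. apply continuous_const. }
    assert (HcPu : continuous (fun r => PN N (U r) n) s).
    { unfold PN. destruct (Nat.ltb n N). exact HcuN. apply continuous_const. }
    assert (Hdv : is_derive (fun r => v r n) s
       (- lam n * v s n + f (v s) n + g n - K * (PN N (v s) n - PN N (U s) n))).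
    { eapply is_derive_val.
      apply (deriv_from_int (fun r => v r n) (fun r => - lam n * v r n + f (v r) n + g n
          - K * (PN N (v r) n - ThetaN (fun j => F (u (r - INR k * tau + INR j * tau))) n))).
      - exact Hs.
      - intros r Hr. exact (Hv_int n r Hr).
      - apply (continuous_ext_loc _ (fun r => - lam n * v r n + f (v r) n + g n - K * (PN N (v r) n - PN N (U r) n))).
        + exists (mkposreal s Hs). intros y Hy. apply ball_pos in Hy.
          rewrite HTheta, HuU by lra. reflexivity.
        + apply cont_comb; auto.
      - rewrite HTheta, HuU by lra. reflexivity. }
    assert (HdU : is_derive (fun r => U r n) s (- lam n * U s n + f (U s) n + g n - 0)).
    { apply (deriv_from_int (fun r => U r n) (fun r => - lam n * U r n + f (U r) n + g n - 0)).
      - exact Hs.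
      - intros r Hr. exact (HU_int n r Hr).
      - apply (continuous_ext (fun r => - lam n * U r n + f (U r) n + g n - 0 * (0 - 0))).
        intros r. rewrite Rmult_0_l. reflexivity.
        apply cont_comb; auto; apply continuous_const. }
    eapply is_derive_val.
    apply (is_derive_ext (fun r => minus (v r n) (U r n))). intros r; reflexivity.
    apply (is_derive_minus _ _ s _ _ Hdv HdU).
    unfold W, D, mu, seq_sub, PN. Rops. match goal with |- ?a = ?b => change (@eq R a b) end. destruct (Nat.ltb n N); ring. }
  assert (HWA : forall s, 0 < s -> inHs lam alpha (W s)).
  { intros s Hs. apply inHs_sub; auto. }
  assert (HWH : forall s, 0 <= s -> inH (W s)).
  { intros s Hs. apply inH_sub; auto. }
  assert (Hom : forall n, 0 < om n) by (intros; apply Rpower_gt0).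
  assert (HDbound : forall s, 0 < s -> forall M,
     psum (fun n => / om n * D s n ^ 2) M <= Lp ^ 2 * (psum (fun n => om n * W s n ^ 2) M
        + (Series (fun n => om n * W s n ^ 2) - psum (fun n => om n * W s n ^ 2) M))).
  { intros s Hs M.
    assert (HDs : inHs lam (- alpha) (D s)).
    { apply inHs_sub; apply Hfb; auto. }
    rewrite (psum_ext _ (fun n => Rpower (lam n) (- alpha) * D s n ^ 2)).
    2:{ intros n. unfold om. rewrite Rpower_Ropp. reflexivity. }
    eapply Rle_trans. apply psum_le_Series.
    intros n. apply Rmult_le_pos. left; apply Rpower_gt0. apply pow2_ge_0.
    exact HDs.
    rewrite <- normHs_sq by exact HDs.
    replace (Lp ^ 2 * (psum (fun n => om n * W s n ^ 2) M
        + (Series (fun n => om n * W s n ^ 2) - psum (fun n => om n * W s n ^ 2) M)))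
      with ((Lp * normHs lam alpha (W s)) ^ 2).
    2:{ rewrite Rpow_mult_distr, normHs_sq by auto. unfold om. ring. }
    assert (H1 : normHs lam (- alpha) (D s) <= Lp * normHs lam alpha (W s)).
    { eapply Rle_trans. apply Hlip; auto.
      apply Rmult_le_compat_r; auto. apply normHs_nonneg. }
    pose proof (normHs_nonneg lam (- alpha) (D s)).
    apply pow_incr. auto. }
  assert (Hnn : forall (x : hseq) n, 0 <= om n * x n ^ 2).
  { intros x n. apply Rmult_le_pos. left; auto. apply pow2_ge_0. }
  assert (Hcore : forall a b, 0 < a -> a < b -> forall eps, 0 < eps ->
     Series (fun n => W b n ^ 2) <= exp (- (2 * beta) * (b - a)) * Series (fun n => W a n ^ 2)
        + Lp * eps / (2 * beta)).
  { intros a b Ha0 Hab eps Heps.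
    set (T := fun M s => Series (fun n => om n * W s n ^ 2) - psum (fun n => om n * W s n ^ 2) M).
    destruct (unif_small T a b eps) as [M0 HM0]. lra.
    { intros t0 Ht0.
      assert (Ht0p : 0 < t0) by lra.
      destruct (Series_tail_small (fun n => om n * W t0 n ^ 2) (Hnn (W t0)) (HWA t0 Ht0p) (eps / 4))
        as [M1 HM1]. lra.
      assert (Hsq : 0 < sqrt (eps / 16)) by (apply sqrt_lt_R0; lra).
      destruct (HcontV t0 Ht0p (sqrt (eps / 16)) Hsq) as [d1 [Hd1 Hv1]].
      destruct (HcontU t0 Ht0p (sqrt (eps / 16)) Hsq) as [d2 [Hd2 HU2]].
      exists M1, (Rmin d1 d2). split. apply Rmin_glb_lt; auto.
      intros s Hs Hst M' HM'.
      assert (Hsp0 : 0 < s) by lra.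
      assert (Hst1 : Rabs (s - t0) < d1) by (eapply Rlt_le_trans; [exact Hst| apply Rmin_l]).
      assert (Hst2 : Rabs (s - t0) < d2) by (eapply Rlt_le_trans; [exact Hst| apply Rmin_r]).
      specialize (Hv1 s Hsp0 Hst1). specialize (HU2 s Hsp0 Hst2).
      assert (Edv : inHs lam alpha (seq_sub (v s) (v t0))) by (apply inHs_sub; auto).
      assert (EdU : inHs lam alpha (seq_sub (U s) (U t0))) by (apply inHs_sub; auto).
      pose proof (tail_cmp om (W s) (W t0) (seq_sub (v s) (v t0)) (seq_sub (U s) (U t0)) M'
        Hom (HWA s Hsp0) (HWA t0 Ht0p) Edv EdU) as Htc.
      assert (Sv : Series (fun n => om n * seq_sub (v s) (v t0) n ^ 2) < eps / 16).
      { unfold om. rewrite <- normHs_sq by auto. apply sq_lt_sqrt; auto. apply normHs_nonneg. }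
      assert (SU : Series (fun n => om n * seq_sub (U s) (U t0) n ^ 2) < eps / 16).
      { unfold om. rewrite <- normHs_sq by auto. apply sq_lt_sqrt; auto. apply normHs_nonneg. }
      assert (HM1' := HM1 M' HM').
      unfold T. apply Rle_trans with (2 * (eps / 4) + 4 * (eps / 16) + 4 * (eps / 16)); [|lra].
      eapply Rle_trans. apply Htc.
      intros n. unfold W, seq_sub. ring. lra. }
    apply Series_le_bound. exact (HWH b ltac:(lra)). intros M.
    set (M2 := Nat.max M M0).
    apply Rle_trans with (psum (fun n => W b n ^ 2) M2).
    { apply psum_mono. intros; apply pow2_ge_0. unfold M2; lia. }
    assert (Hdec := exp_decay_lemma (fun s => psum (fun n => W s n ^ 2) M2)
      (fun s => psum (fun n => 2 * W s n * (- mu n * W s n + D s n)) M2) a b (Lp * eps) (2 * beta) Hab).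
    assert (Hpa : psum (fun n => W a n ^ 2) M2 <= Series (fun n => W a n ^ 2)).
    { apply psum_le_Series. intros; apply pow2_ge_0. exact (HWH a ltac:(lra)). }
    assert (Hexp : 0 < exp (- (2 * beta) * (b - a))) by apply exp_pos.
    cut (psum (fun n => W b n ^ 2) M2 <= exp (- (2 * beta) * (b - a)) * psum (fun n => W a n ^ 2) M2
        + Lp * eps / (2 * beta)).
    { intros Hc. assert (exp (- (2 * beta) * (b - a)) * psum (fun n => W a n ^ 2) M2 <=
        exp (- (2 * beta) * (b - a)) * Series (fun n => W a n ^ 2)) by (apply Rmult_le_compat_l; lra).
      lra. }
    apply Hdec.
    - intros s Hs. apply deriv_psum_sq. intros n. apply Hderiv. lra.
    - intros s Hs. apply (energy_ineq (W s) (D s) mu om); auto.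
      + intros n. exact (Hspec K HK n).
      + eapply Rle_trans. apply HDbound. lra.
        apply Rmult_le_compat_l. apply pow2_ge_0. apply Rplus_le_compat_l.
        apply (HM0 s Hs M2). unfold M2; lia.
    - lra.
    - apply Rmult_le_pos; lra. }
  destruct (Req_dec t 0) as [Ht0 | Ht0].
  { subst t. rewrite Rmult_0_r, exp_0, Rmult_1_r. lra. }
  assert (Htp : 0 < t) by lra.
  rewrite (HuU t Ht).
  assert (HN0 : 0 <= normH (seq_sub (v 0) (u 0))) by apply sqrt_pos.
  set (N0 := normH (seq_sub (v 0) (u 0))) in *.
  set (E0 := N0 ^ 2).
  assert (HE0 : 0 <= E0) by (unfold E0; apply pow2_ge_0).
  assert (Het : 0 < exp (- (2 * beta) * t)) by apply exp_pos.
  assert (HE : normH (W t) ^ 2 <= exp (- (2 * beta) * t) * E0).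
  { apply (eps_remove _ _ (exp (- (2 * beta) * t) * (3 * E0 + 2))). intros eta [Heta0 Heta1].
    set (c0 := eta / (4 * (1 + / eta))).
    assert (Hinv : 0 < / eta) by (apply Rinv_0_lt_compat; lra).
    assert (Hc0 : 0 < c0) by (unfold c0; apply Rdiv_lt_0_compat; lra).
    assert (Hsc0 : 0 < sqrt c0) by (apply sqrt_lt_R0; auto).
    destruct (Hv_Hc 0 (Rle_refl 0) (sqrt c0) Hsc0) as [dv [Hdv Hvc]].
    destruct (HU_Hc 0 (Rle_refl 0) (sqrt c0) Hsc0) as [dU [HdU HUc]].
    assert (Hln : 0 < ln (1 + eta)).
    { rewrite <- ln_1. apply ln_increasing; lra. }
    set (d1 := ln (1 + eta) / (2 * beta)).
    assert (Hd1 : 0 < d1) by (unfold d1; apply Rdiv_lt_0_compat; lra).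
    set (a := Rmin (Rmin (t / 2) d1) (Rmin (dv / 2) (dU / 2))).
    assert (Ha1 : a <= t / 2) by (unfold a; eapply Rle_trans; apply Rmin_l).
    assert (Ha2 : a <= d1) by (unfold a; eapply Rle_trans; [apply Rmin_l| apply Rmin_r]).
    assert (Ha3 : a <= dv / 2) by (unfold a; eapply Rle_trans; [apply Rmin_r| apply Rmin_l]).
    assert (Ha4 : a <= dU / 2) by (unfold a; eapply Rle_trans; [apply Rmin_r| apply Rmin_r]).
    assert (Ha0 : 0 < a).
    { unfold a. apply Rmin_glb_lt; apply Rmin_glb_lt; lra. }
    assert (Hat : Series (fun n => W t n ^ 2) <= exp (- (2 * beta) * (t - a)) * Series (fun n => W a n ^ 2)).
    { apply (eps_remove _ _ (Lp / (2 * beta))). intros e [He0 He1].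
      replace (Lp / (2 * beta) * e) with (Lp * e / (2 * beta)) by (field; lra).
      apply Hcore; lra. }
    rewrite <- !normH_sq in Hat by (apply HWH; lra).
    assert (Hra : Rabs (a - 0) = a) by (rewrite Rminus_0_r; apply Rabs_pos_eq; lra).
    assert (Hva : normH (seq_sub (v a) (v 0)) ^ 2 <= c0).
    { left. apply sq_lt_sqrt. apply sqrt_pos. apply Hvc. lra. rewrite Hra. lra. }
    assert (HUa : normH (seq_sub (U a) (U 0)) ^ 2 <= c0).
    { left. apply sq_lt_sqrt. apply sqrt_pos. apply HUc. lra. rewrite Hra. lra. }
    assert (HU0' : U 0 = u 0) by exact HU0.
    rewrite HU0' in HUa.
    assert (Hnear := near0 (v 0) (u 0) (v a) (U a) eta c0 Heta0 (HvH 0 (Rle_refl 0))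
       (HattH _ (Hu 0)) (HvH a ltac:(lra)) (HUH a ltac:(lra)) Hva HUa).
    replace ((1 + / eta) * (4 * c0)) with eta in Hnear by (unfold c0; field; lra).
    change (normH (W a) ^ 2 <= (1 + eta) * E0 + eta) in Hnear.
    assert (Hea : exp (2 * beta * a) <= 1 + eta).
    { rewrite <- (exp_ln (1 + eta)) by lra.
      destruct (Req_dec a d1) as [Hq|Hq].
      - right. f_equal. rewrite Hq. unfold d1. field. lra.
      - left. apply exp_increasing. assert (a < d1) by lra.
        apply Rlt_le_trans with (2 * beta * d1). nra. unfold d1. right; field; lra. }
    assert (Hsplit : exp (- (2 * beta) * (t - a)) = exp (- (2 * beta) * t) * exp (2 * beta * a)).
    { rewrite <- exp_plus. f_equal. ring. }
    rewrite Hsplit in Hat.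
    assert (HXa : 0 <= normH (W a) ^ 2) by apply pow2_ge_0.
    assert (Hea0 : 0 < exp (2 * beta * a)) by apply exp_pos.
    assert (H1 : exp (2 * beta * a) * normH (W a) ^ 2 <= (1 + eta) * ((1 + eta) * E0 + eta)).
    { apply Rle_trans with ((1 + eta) * normH (W a) ^ 2).
      apply Rmult_le_compat_r; lra. apply Rmult_le_compat_l; lra. }
    assert (H2 : (1 + eta) * ((1 + eta) * E0 + eta) <= E0 + (3 * E0 + 2) * eta).
    { assert (0 <= eta * (1 - eta)) by (apply Rmult_le_pos; lra).
      assert (0 <= eta * (1 - eta) * (E0 + 1)) by (apply Rmult_le_pos; lra). nra. }
    assert (H3 : exp (- (2 * beta) * t) * (exp (2 * beta * a) * normH (W a) ^ 2)
               <= exp (- (2 * beta) * t) * (E0 + (3 * E0 + 2) * eta)).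
    { apply Rmult_le_compat_l; lra. }
    rewrite <- Rmult_assoc in H3. nra. }
  assert (HWt0 : 0 <= normH (W t)) by apply sqrt_pos.
  assert (Hexp2 : exp (- beta * t) ^ 2 = exp (- (2 * beta) * t)).
  { simpl. rewrite Rmult_1_r, <- exp_plus. f_equal. ring. }
  assert (Hbt : 0 < exp (- beta * t)) by apply exp_pos.
  change (normH (W t) <= N0 * exp (- beta * t)).
  destruct (Rle_dec (normH (W t)) (N0 * exp (- beta * t))) as [Hle|Hgt]; auto.
  exfalso. assert (Hlt : N0 * exp (- beta * t) < normH (W t)) by lra.
  assert (0 <= N0 * exp (- beta * t)) by (apply Rmult_le_pos; lra).
  assert ((N0 * exp (- beta * t)) ^ 2 < normH (W t) ^ 2) by nra.
  rewrite Rpow_mult_distr, Hexp2 in H0. unfold E0 in HE. nra.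
Qed.
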